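(* Let $n>2k\ge2$ be integers and let $J(n,k)$ be the Johnson graph with vertex set $V$ the $k$-subsets of $[n]$, two vertices adjacent iff their intersection has size $k-1$; let $A$ be its adjacency matrix, with distinct eigenvalues $\phi_0>\dots>\phi_k$ and corresponding orthogonal eigenprojections $P_0,\dots,P_k$. Let $w_1\neq w_2$ be two vertices, $\gamma>0$, and $H=-\gamma A-|w_1\rangle\langle w_1|-|w_2\rangle\langle w_2|$ on $\mathcal{H}=\mathbb{C}^V$. Let $\mathcal{H}_{\mathrm{inv}}$ be the subspace of vectors $f\in\mathcal{H}$ such that $f(v)=f(v')$ whenever $|v\cap w_1\cap w_2|=|v'\cap w_1\cap w_2|$ and the multisets $\{|v\cap w_1|,|v\cap w_2|\}$ and $\{|v'\cap w_1|,|v'\cap w_2|\}$ coincide. Let $\lambda$ be an eigenvalue of $H$ having an eigenvector in $\mathcal{H}_{\mathrm{inv}}$, and suppose $\lambda\notin\sigma(-\gamma A)$. Define $$m_i=1+\sum_{\ell=0}^k\frac{\|P_\ell|w_i\rangle\|^2}{\lambda+\gamma\phi_\ell}\ (i=1,2),\qquad m_3=\sum_{\ell=0}^k\frac{\langle w_1|P_\ell|w_2\rangle}{\lambda+\gamma\phi_\ell}.$$ Then $m_1+m_3=m_2+m_3=0$.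
   Context: $\{|v\rangle : v\in V\}$ is the computational basis; $\sigma(U)$ denotes the spectrum of $U$. *)

(* Defs.v *)
From HB Require Import structures.
From mathcomp Require Import all_boot all_order all_algebra.
Set Implicit Arguments. Unset Strict Implicit. Unset Printing Implicit Defensive.
Import Order.TTheory GRing.Theory Num.Theory.
Local Open Scope ring_scope.

Definition jvert (n k : nat) := {S : {set 'I_n} | #|S| == k}.

(* Number of vertices; C^V is represented as column vectors 'cV_(jN n k),
   coordinates indexed through enum_val / enum_rank. *)
Definition jN (n k : nat) : nat := #|{: jvert n k}|.

Section Johnson.
Variables (C : numClosedFieldType) (n k : nat).

Definition jv (i : 'I_(jN n k)) : {set 'I_n} := val (enum_val i).

Definition johnson_adj : 'M[C]_(jN n k) :=
  \matrix_(i, j) ((#|jv i :&: jv j| == k.-1)%N)%:R.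

Definition ket (w : jvert n k) : 'cV[C]_(jN n k) :=
  \col_i (i == enum_rank w)%:R.
Definition bra (w : jvert n k) : 'rV[C]_(jN n k) :=
  \row_i (i == enum_rank w)%:R.

Definition hamiltonian (gamma : C) (w1 w2 : jvert n k) : 'M[C]_(jN n k) :=
  - (gamma *: johnson_adj) - ket w1 *m bra w1 - ket w2 *m bra w2.

Definition inv_equiv (w1 w2 : jvert n k) (i j : 'I_(jN n k)) : bool :=
  let a := val w1 in let b := val w2 in
  [&& (#|jv i :&: a :&: b| == #|jv j :&: a :&: b|)%N &
      [|| ((#|jv i :&: a| == #|jv j :&: a|) && (#|jv i :&: b| == #|jv j :&: b|))%N
        | ((#|jv i :&: a| == #|jv j :&: b|) && (#|jv i :&: b| == #|jv j :&: a|))%N]].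

Definition in_Hinv (w1 w2 : jvert n k) (f : 'cV[C]_(jN n k)) : Prop :=
  forall i j, inv_equiv w1 w2 i j -> f i 0 = f j 0.

Definition adjmx (M : 'M[C]_(jN n k)) : 'M[C]_(jN n k) := map_mx Num.conj M^T.

Definition spectral_decomposition (A : 'M[C]_(jN n k))
  (phi : 'I_k.+1 -> C) (P : 'I_k.+1 -> 'M[C]_(jN n k)) : Prop :=
  [/\ forall l, phi l \is Num.real,
      forall l m : 'I_k.+1, (l < m)%N -> phi m < phi l,
      forall l, P l != 0
    & forall l, adjmx (P l) = P l] /\
  [/\ forall l m, P l *m P m = (if l == m then P l else 0),
      \sum_l P l = 1%:M
    & A = \sum_l phi l *: P l].

End Johnson.

(* Main.v *)
Require Import Defs.
From HB Require Import structures.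
From mathcomp Require Import all_boot all_order all_algebra.
Import Order.TTheory GRing.Theory Num.Theory.
Local Open Scope ring_scope.

Lemma ket_delta (C : numClosedFieldType) n k (w : jvert n k) :
  ket C w = delta_mx (enum_rank w) 0.
Proof. by apply/matrixP => i j; rewrite !mxE ord1 eqxx andbT. Qed.

Lemma bra_delta (C : numClosedFieldType) n k (w : jvert n k) :
  bra C w = delta_mx 0 (enum_rank w).
Proof. by apply/matrixP => i j; rewrite !mxE ord1 eqxx. Qed.

Lemma entry_bra_ket (R : comPzSemiRingType) N (X : 'M[R]_N) (i j : 'I_N) :
  (delta_mx (0 : 'I_1) i *m X *m delta_mx j (0 : 'I_1)) 0 0 = X i j.
Proof. by rewrite -rowE -colE !mxE. Qed.

Lemma sum_orth (R : comPzRingType) N K (P : 'I_K -> 'M[R]_N) (a b : 'I_K -> R) :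
  (forall l m, P l *m P m = (if l == m then P l else 0)) ->
  (\sum_l a l *: P l) *m (\sum_l b l *: P l) = \sum_l (a l * b l) *: P l.
Proof.
move=> horth; rewrite mulmx_suml; apply: eq_bigr => l _.
rewrite mulmx_sumr (bigD1 l) //= -scalemxAl -scalemxAr horth eqxx scalerA.
rewrite big1 ?addr0 // => m /negbTE hm.
by rewrite -scalemxAl -scalemxAr horth eq_sym hm !scaler0.
Qed.

Theorem corollary2 (C : numClosedFieldType) (n k : nat)
  (hk : (2 <= 2 * k)%N) (hn : (2 * k < n)%N)
  (phi : 'I_k.+1 -> C) (P : 'I_k.+1 -> 'M[C]_(jN n k))
  (hspec : spectral_decomposition (johnson_adj C n k) phi P)
  (w1 w2 : jvert n k) (hw : w1 != w2)
  (gamma : C) (hgamma : 0 < gamma)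
  (lambda : C)
  (heig : exists f : 'cV[C]_(jN n k),
      [/\ f != 0, in_Hinv w1 w2 f & hamiltonian gamma w1 w2 *m f = lambda *: f])
  (hnspec : ~~ eigenvalue (- (gamma *: johnson_adj C n k)) lambda) :
  let m1 := 1 + \sum_l (\sum_j `|(P l *m ket C w1) j 0| ^+ 2) / (lambda + gamma * phi l) in
  let m2 := 1 + \sum_l (\sum_j `|(P l *m ket C w2) j 0| ^+ 2) / (lambda + gamma * phi l) in
  let m3 := \sum_l (bra C w1 *m P l *m ket C w2) 0 0 / (lambda + gamma * phi l) in
  m1 + m3 = 0 /\ m2 + m3 = 0.
Proof.
move=> m1 m2 m3.
case: hspec => [[hreal hdec hnz hadj] [horth hsum hA]].
have hAT : (johnson_adj C n k)^T = johnson_adj C n k.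
  by apply/matrixP => i j; rewrite !mxE setIC.
set A := johnson_adj C n k in hA hnspec heig hAT.
have hPA l : P l *m A = phi l *: P l.
  rewrite hA mulmx_sumr (bigD1 l) //= -scalemxAr horth eqxx.
  rewrite big1 ?addr0 // => m /negbTE hm.
  by rewrite -scalemxAr horth eq_sym hm scaler0.
pose d l := lambda + gamma * phi l.
have hd l : d l != 0.
  apply/negP => /eqP hdl; move/negP: hnspec; apply; apply/eigenvalueP.
  have [i hi] : exists i, row i (P l) != 0.
    case: (boolP [exists i, row i (P l) != 0]) => [/existsP //|hno].
    case/negP: (hnz l); apply/eqP/matrixP => i j.
    by move: hno => /existsPn /(_ i) /negPn /eqP /rowP /(_ j); rewrite !mxE.
  exists (row i (P l)) => //.
  rewrite -row_mul mulmxN -scalemxAr hPA scalerA -scaleNr.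
  have -> : lambda = -(gamma * phi l) by by apply/eqP; rewrite -addr_eq0; apply/eqP.
  by apply/rowP => j; rewrite !mxE.
pose R := \sum_l (d l)^-1 *: P l.
pose M := lambda *: (1%:M : 'M[C]_(jN n k)) + gamma *: A.
have hM : M = \sum_l d l *: P l.
  rewrite /M hA -hsum !scaler_sumr -big_split /=; apply: eq_bigr => l _.
  by rewrite scalerA -scalerDl.
have hRM : R *m M = 1%:M.
  rewrite hM sum_orth // -hsum; apply: eq_bigr => l _.
  by rewrite mulVf ?scale1r.
have hMR : M *m R = 1%:M.
  rewrite hM sum_orth // -hsum; apply: eq_bigr => l _.
  by rewrite mulfV ?scale1r.
have hMT : M^T = M by rewrite /M linearD /= !linearZ /= trmx1 hAT.
have hRT : R^T = R.
  by rewrite -[R^T]mulmx1 -hMR mulmxA -hMT -trmx_mul hMR trmx1 mul1mx.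
case: heig => f [fnz hinv hf].
set r1 := enum_rank w1; set r2 := enum_rank w2.
have hab : f r1 0 = f r2 0.
  apply: hinv; rewrite /inv_equiv /jv /r1 /r2 !enum_rankK.
  apply/andP; split.
    by rewrite (setIid (val w1)) (setIC (val w2) (val w1)) -setIA (setIid (val w2)).
  apply/orP; right; rewrite (setIid (val w1)) (setIid (val w2)) (eqP (valP w1)) (eqP (valP w2)) eqxx /=.
  by rewrite setIC.
have hbra (w : jvert n k) : bra C w *m f = (f (enum_rank w) 0)%:M.
  apply/matrixP => i j; rewrite ord1 [j]ord1 bra_delta -rowE !mxE.
  by rewrite eqxx mulr1n.
have hMf : M *m f = - (f r1 0 *: ket C w1) - (f r2 0 *: ket C w2).
  rewrite /M mulmxDl -!scalemxAl mul1mx -hf /hamiltonian !mulmxBl mulNmx.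
  rewrite -!mulmxA !hbra !mul_mx_scalar -scalemxAl.
  by rewrite [LHS]addrC !addrA addrN add0r.
have hfR : f = - (f r1 0 *: (R *m (ket C w1 + ket C w2))).
  rewrite -{1}[f]mul1mx -hRM -mulmxA hMf -hab -opprD -scalerDr mulmxN.
  by rewrite scalemxAr.
have ha : f r1 0 != 0.
  apply: contraNneq fnz => ha; by rewrite hfR ha scale0r oppr0.
have hfe i : f i 0 = -(f r1 0 * (R i r1 + R i r2)).
  by rewrite {1}hfR mulmxDr !ket_delta -!colE !mxE.
have e1 : 1 + R r1 r1 + R r1 r2 = 0.
  have := hfe r1 => /eqP.
  rewrite -addr_eq0 -{1}[f r1 0]mulr1 -mulrDr mulf_eq0 (negbTE ha) /=.
  by rewrite addrA => /eqP.
have e2 : 1 + R r2 r1 + R r2 r2 = 0.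
  have := hfe r2; rewrite -hab => /eqP.
  rewrite -addr_eq0 -{1}[f r1 0]mulr1 -mulrDr mulf_eq0 (negbTE ha) /=.
  by rewrite addrA => /eqP.
have hsym : R r2 r1 = R r1 r2.
  by have := congr1 (fun X : 'M[C]_(jN n k) => X r1 r2) hRT; rewrite /= !mxE.
have hRij i j : R i j = \sum_l P l i j / d l.
  by rewrite summxE; apply: eq_bigr => l _; rewrite !mxE mulrC.
have hnorm l r : \sum_j `|(P l *m delta_mx r (0 : 'I_1)) j 0| ^+ 2 = P l r r.
  have := horth l l; rewrite eqxx => /(congr1 (fun X : 'M[C]_(jN n k) => X r r)); rewrite mxE => <-.
  apply: eq_bigr => j _; rewrite -colE normCK !mxE mulrC.
  by have := congr1 (fun X : 'M[C]_(jN n k) => X r j) (hadj l); rewrite !mxE => ->.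
have hm3 : m3 = R r1 r2.
  by rewrite /m3 hRij; apply: eq_bigr => l _; rewrite bra_delta ket_delta entry_bra_ket.
have hm1 : m1 = 1 + R r1 r1.
  by rewrite /m1 hRij; congr (_ + _); apply: eq_bigr => l _; rewrite ket_delta hnorm.
have hm2 : m2 = 1 + R r2 r2.
  by rewrite /m2 hRij; congr (_ + _); apply: eq_bigr => l _; rewrite ket_delta hnorm.
rewrite hm1 hm2 hm3; split => //.
by rewrite -hsym -e2 addrAC.
Qed.
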